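(* Let $S$ be a cyclotomic numerical semigroup. Then \[ \mathrm P_S(x)=\prod_{d\in\mathcal D}\Phi_d(x)^{e_d}, \] where $\mathcal D=\{d_1,\ldots,d_s\}$ is a finite set of positive integers and the exponents $e_d$ are positive integers. Furthermore, all elements of $\mathcal D$ are composite.
   Context: A numerical semigroup is a submonoid $S$ of $(\mathbb N,+)$ with $\mathbb N\setminus S$ finite; its semigroup polynomial is $\mathrm P_S(x)=(1-x)\sum_{s\in S}x^s$ (a monic polynomial with integer coefficients). A Kronecker polynomial is a monic polynomial with integer coefficients all of whose complex roots lie in the closed unit disc. $S$ is called cyclotomic if $\mathrm P_S$ is a Kronecker polynomial. $\Phi_n$ denotes the $n$-th cyclotomic polynomial. *)

(* Defs.v *)
From mathcomp Require Import all_boot all_order all_algebra all_field.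
Set Implicit Arguments. Unset Strict Implicit. Unset Printing Implicit Defensive.
Import Order.TTheory GRing.Theory Num.Theory.
Local Open Scope ring_scope.

Definition numerical_semigroup (S : pred nat) : Prop :=
  [/\ 0%N \in S,
      (forall a b, a \in S -> b \in S -> (a + b)%N \in S)
    & exists N : nat, forall n, (N <= n)%N -> n \in S].

(* Coefficient of x^n in (1 - x) * \sum_{s in S} x^s. *)
Definition sgp_coef (S : pred nat) (n : nat) : int :=
  (n \in S)%:Z - (if n is m.+1 then (m \in S)%:Z else 0).

Definition is_semigroup_poly (S : pred nat) (P : {poly int}) : Prop :=
  forall n : nat, P`_n = sgp_coef S n.

Definition kronecker (P : {poly int}) : Prop :=
  P \is monic /\
  forall z : algC, root (map_poly (intr : int -> algC) P) z -> `|z| <= 1.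

Definition composite (d : nat) : bool := (1 < d)%N && ~~ prime d.

(* Main.v *)
Require Import Defs.
From mathcomp Require Import all_boot all_order all_algebra all_field.
From mathcomp Require Import zify.
Set Implicit Arguments. Unset Strict Implicit. Unset Printing Implicit Defensive.
Import Order.TTheory GRing.Theory Num.Theory.
Local Open Scope ring_scope.

Section Trig.
Variable R : comNzRingType.

Lemma trig_mulmx n (A B : 'M[R]_n) : is_trig_mx A -> is_trig_mx B ->
  is_trig_mx (A *m B) /\ forall i, (A *m B) i i = A i i * B i i.
Proof.
move=> /is_trig_mxP tA /is_trig_mxP tB; split.
  apply/is_trig_mxP => i j lij; rewrite mxE big1 // => l _.
  have [lil|lli] := ltnP i l; first by rewrite tA // mul0r.
  by rewrite tB ?mulr0 // (leq_ltn_trans lli lij).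
move=> i; rewrite mxE (bigD1 i) //= big1 ?addr0 // => l nli.
have [lil|lli] := ltnP i l; first by rewrite tA // mul0r.
rewrite tB ?mulr0 //; rewrite ltn_neqAle lli andbT.
by apply: contra nli => /eqP/val_inj ->.
Qed.

Lemma trig_exp n (A : 'M[R]_n) k : is_trig_mx A ->
  is_trig_mx (A ^+ k) /\ forall i, (A ^+ k) i i = A i i ^+ k.
Proof.
move=> tA; elim: k => [|k [tk dk]].
  by split; [exact: scalar_mx_is_trig | move=> i; rewrite expr0 mxE eqxx].
have [t d] := trig_mulmx tA tk.
rewrite exprS -mulmxE; split=> // i; by rewrite d dk exprS.
Qed.

End Trig.
Lemma char_poly_conj (R : comUnitRingType) n (U M : 'M[R]_n) : U \in unitmx ->
  char_poly (U *m M *m invmx U) = char_poly M.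
Proof.
move=> Uu; rewrite /char_poly /char_poly_mx.
pose C := map_mx (@polyC R) U; pose C' := map_mx (@polyC R) (invmx U).
have CC' : C *m C' = 1%:M by rewrite -map_mxM mulmxV // map_mx1.
have C'C : C' *m C = 1%:M by rewrite -map_mxM mulVmx // map_mx1.
have -> : 'X%:M - map_mx polyC (U *m M *m invmx U) =
   C *m ('X%:M - map_mx polyC M) *m C'.
  rewrite !map_mxM mulmxBr mulmxBl -/C -/C'; congr (_ - _).
  by rewrite mul_mx_scalar -scalemxAl CC' scalemx1.
rewrite !det_mulmx mulrC mulrA -det_mulmx C'C det1 mul1r //.
Qed.

Lemma prod_XsubC_coef_bound (s : seq algC) :
  all (fun x => `|x| <= 1) s ->
  forall j, `|(\prod_(x <- s) ('X - x%:P))`_j| <= 2%:R ^+ size s.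
Proof.
elim: s => [|a s IH] /=.
  by move=> _ j; rewrite big_nil coefC; case: j => [|j]; rewrite ?normr1 ?normr0.
move=> /andP[ha hs] j; rewrite big_cons mulrBl coefB coefCM.
have IHs := IH hs.
rewrite exprS (_ : 2%:R * _ = 2%:R ^+ size s + 2%:R ^+ size s); last first.
  by rewrite mulr_natl mulr2n.
apply: (le_trans (ler_normB _ _)); apply: lerD.
  rewrite coefXM; case: j => [|j]; rewrite ?normr0 ?exprn_ge0 ?IHs //.
rewrite normrM; rewrite -[X in _ <= X]mul1r; apply: ler_pM => //.
Qed.

Fixpoint lists (r : seq int) (m : nat) : seq (seq int) :=
  if m is m'.+1 then [seq c :: l | c <- r, l <- lists r m'] else [:: [::]].

Lemma listsP (r : seq int) m (l : seq int) :
  size l = m -> all (mem r) l -> l \in lists r m.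
Proof.
elim: m l => [|m IH] [|c l] //= [sl] /andP[cr lr].
by apply: allpairs_f => //; apply: IH.
Qed.

Definition roots_of (p : {poly algC}) : seq algC :=
  sval (closed_field_poly_normal p).

Lemma roots_ofP p x : p != 0 -> root p x -> x \in roots_of p.
Proof.
rewrite /roots_of; case: (closed_field_poly_normal p) => r /= Dp p0.
rewrite Dp rootZ ?lead_coef_eq0 // root_prod_XsubC //.
Qed.

Lemma pigeon_pow (z : algC) (W : seq algC) :
  z != 0 -> (forall k, z ^+ k \in W) -> exists2 m, (0 < m)%N & z ^+ m = 1.
Proof.
move=> z0 hW.
pose s := [seq index (z ^+ k) W | k <- iota 0 (size W).+1].
have : ~~ uniq s.
  apply/negP => us.
  have hsub : {subset s <= iota 0 (size W)}.
    by move=> x /mapP[k _ ->]; rewrite mem_iota /= add0n index_mem.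
  have := uniq_leq_size us hsub.
  by rewrite size_map !size_iota ltnn.
case/(uniqPn 0%N) => i [j [lij]]; rewrite size_map size_iota => ljs.
rewrite !(nth_map 0%N) ?size_iota ?(ltn_trans lij) // !nth_iota ?(ltn_trans lij) //.
rewrite !add0n => eij.
have x : z ^+ i = z ^+ j by rewrite -(nth_index 0 (hW i)) eij nth_index.
exists (j - i)%N; first by rewrite subn_gt0.
move: x; rewrite -(subnKC (ltnW lij)) exprD -{1}[z ^+ i]mulr1 => /mulfI -> //.
  by rewrite addKn.
by rewrite expf_neq0.
Qed.
Lemma kron_roots (P : {poly int}) : P \is monic -> P`_0 != 0 ->
  (forall z : algC, root (map_poly intr P) z -> `|z| <= 1) ->
  forall z : algC, root (map_poly intr P) z -> exists2 m, (0 < m)%N & z ^+ m = 1.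
Proof.
move=> Pmon P0 Pdisc z zroot.
have z0 : z != 0.
  apply: contra P0 => /eqP z0; move: zroot; rewrite z0 /root horner_coef0 coef_map.
  by rewrite intr_eq0.
set n := (size P).-1.
pose A : 'M[int]_n := companionmx P.
have hA : char_poly A = P by apply: companionmxK.
pose B := map_mx (intr : int -> algC) A.
have hB : map_poly intr P = char_poly B by rewrite -hA map_char_poly.
have npos : (0 < n)%N.
  rewrite lt0n; apply/negP => /eqP n0.
  move: zroot; rewrite hB /root.
  have : size (char_poly B) == 1%N by rewrite size_char_poly n0.
  move=> /size_poly1P [c c0 hc].
  have := char_poly_monic B; rewrite hc monicE lead_coefC => /eqP ->.
  by rewrite hornerC oner_eq0.
have [U Uun Utrig] := Schur B npos.
have Uu : U \in unitmx by apply: unitarymx_unit.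
pose T := U *m B *m invmx U.
have Ttrig : is_trig_mx T by rewrite /T -conjumx.
have hT : map_poly intr P = \prod_(i < n) ('X - (T i i)%:P).
  by rewrite hB -(char_poly_conj B Uu) char_poly_trig.
have Tk k : U *m B ^+ k *m invmx U = T ^+ k.
  elim: k => [|k IH]; first by rewrite !expr0 mulmx1 mulmxV.
  rewrite !exprS -!mulmxE -IH /T !mulmxA mulmxKV //.
have Ak k : map_mx (intr : int -> algC) (A ^+ k) = B ^+ k.
  elim: k => [|k IH]; first by rewrite !expr0 map_mx1.
  by rewrite !exprS -!mulmxE map_mxM IH.
pose Q k := char_poly (A ^+ k).
have hQ k : map_poly intr (Q k) = \prod_(i < n) ('X - ((T i i) ^+ k)%:P).
  rewrite /Q map_char_poly Ak -(char_poly_conj _ Uu) Tk.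
  have [tk dk] := trig_exp k Ttrig.
  by rewrite char_poly_trig //; apply: eq_bigr => i _; rewrite dk.
have rootT (w : 'I_n -> algC) x : root (\prod_(i < n) ('X - (w i)%:P)) x = [exists i, x == w i].
  rewrite /root horner_prod.
  apply/prodf_eq0/existsP => [[i _]|[i /eqP ->]].
    by rewrite !hornerE subr_eq0 => ?; exists i.
  by exists i => //; rewrite !hornerE subrr.
have Tdisc i : `|T i i| <= 1.
  by apply: Pdisc; rewrite hT rootT; apply/existsP; exists i.
have [i0 zi0] : exists i0, z = T i0 i0.
  by move: zroot; rewrite hT rootT => /existsP[i /eqP ->]; exists i.
pose M := (2 ^ n)%N.
have bound k j : `|(Q k)`_j| <= M%:Z.
  have := prod_XsubC_coef_bound (s := [seq T i i ^+ k | i <- index_enum 'I_n]).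
  rewrite big_map -hQ size_map [index_enum _]unlock -enumT size_enum_ord => /(_ _ j).
  rewrite coef_map /= -intr_norm -natrX -[(2 ^ n)%N]/M -[M%:R]/(M%:Z%:~R) ler_int.
  apply; apply/allP => x /mapP[i _ ->]; rewrite normrX exprn_ile1 //.
pose r := [seq (i%:Z - M%:Z) | i <- iota 0 (M + M).+1].
have inr (c : int) : `|c| <= M%:Z -> c \in r.
  move=> hc; apply/mapP; exists (absz (c + M%:Z)).
    rewrite mem_iota /= add0n ltnS -lez_nat.
    rewrite gez0_abs; last by move: hc; rewrite ler_norml; lia.
    move: hc; rewrite ler_norml; lia.
  rewrite gez0_abs; last by move: hc; rewrite ler_norml; lia.
  by rewrite addrK.
pose W := flatten [seq roots_of (map_poly (intr : int -> algC) (Poly l)) | l <- lists r n.+1].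
apply: (pigeon_pow z0 (W := W)) => k.
apply/flattenP; exists (roots_of (map_poly intr (Q k))).
  apply/mapP; exists (polyseq (Q k)); last by rewrite polyseqK.
  apply: listsP; first by rewrite size_char_poly.
  apply/allP => c /(nthP 0) [j _ <-]; exact: inr.
apply: roots_ofP.
  by rewrite hQ monic_neq0 // monic_prod_XsubC.
by rewrite hQ rootT; apply/existsP; exists i0; rewrite zi0.
Qed.
Lemma ZtoC_comp (p : {poly int}) :
  map_poly (intr : int -> algC) p = map_poly (ratr : rat -> algC) (map_poly intr p).
Proof.
rewrite -map_poly_comp; apply: eq_map_poly => a /=; by rewrite rmorph_int.
Qed.

Lemma Phi_dvd (P : {poly int}) d (z : algC) :
  d.-primitive_root z -> root (map_poly intr P) z -> exists r, P = 'Phi_d * r.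
Proof.
move=> prz rz.
have [p [Dp _] dvp] := minCpolyP z.
have hp : p = map_poly intr 'Phi_d.
  apply: (map_inj_poly (fmorph_inj (ratr : {rmorphism rat -> algC}))); first exact: rmorph0.
  by rewrite -Dp -ZtoC_comp (Cintr_Cyclotomic prz) (minCpoly_cyclotomic prz).
have : p %| map_poly intr P by rewrite -dvp -ZtoC_comp.
rewrite hp dvdp_rat_int => /dvdpP_int [r ->].
by exists r; rewrite zprimitive_monic // Cyclotomic_monic.
Qed.

Lemma cyclo_factor (P : {poly int}) : P \is monic ->
  (forall z : algC, root (map_poly intr P) z -> exists2 m, (0 < m)%N & z ^+ m = 1) ->
  exists L : seq nat, all (fun d => 0 < d)%N L /\ P = \prod_(d <- L) 'Phi_d.
Proof.
have [k] := ubnP (size P); elim: k P => [//|k IH] P szP Pmon Proots.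
have sz1 : size (map_poly (intr : int -> algC) P) = size P.
  by rewrite size_map_inj_poly //; exact: intr_inj.
have [P1|Pn1] := eqVneq (size P) 1%N.
  exists [::]; split => //; rewrite big_nil.
  move/eqP: P1 => /size_poly1P [c c0 hc].
  by move: Pmon; rewrite hc monicE lead_coefC => /eqP ->.
have /closed_rootP [z zr] : size (map_poly (intr : int -> algC) P) != 1%N by rewrite sz1.
have [m m0 zm] := Proots z zr.
have [d prd _] := prim_order_exists m0 zm.
have [r Dr] := Phi_dvd prd zr.
have rmon : r \is monic by rewrite -(monicMl _ (Cyclotomic_monic d)) -Dr.
have szr : (size r < k)%N.
  move: szP; rewrite Dr size_mul ?monic_neq0 ?Cyclotomic_monic // size_Cyclotomic.
  have ht : (0 < totient d)%N by rewrite totient_gt0 (prim_order_gt0 prd).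
  rewrite ltnS => h; apply: leq_trans h.
  by rewrite -[X in (X < _)%N]add0n ltn_add2r.
have [L [L0 DL]] : exists L : seq nat, all (fun d => 0 < d)%N L /\ r = \prod_(d <- L) 'Phi_d.
  apply: IH => // w wr; apply: Proots.
  by rewrite Dr rmorphM rootM wr orbT.
exists (d :: L); split; first by rewrite /= (prim_order_gt0 prd).
by rewrite big_cons Dr DL.
Qed.
Lemma divisors_prime p : prime p -> divisors p = [:: 1%N; p].
Proof.
move=> pp; have [u s mem] := divisors_correct (prime_gt0 pp).
apply: (sorted_eq leq_trans anti_leq s); first by rewrite /= andbT prime_gt0.
apply: uniq_perm => //.
  by rewrite /= andbT inE neq_ltn prime_gt1.
move=> d; rewrite mem !inE; case/primeP: pp => _ pd.
apply/idP/idP; first exact: pd.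
by case/orP => /eqP ->; rewrite ?dvd1n ?dvdnn.
Qed.

Lemma Phi1 : 'Phi_1 = 'X - 1.
Proof. by have := prod_Cyclotomic (ltn0Sn 0); rewrite big_cons big_nil mulr1 expr1. Qed.

Lemma Phi_prime p : prime p -> 'Phi_p = \sum_(i < p) 'X^i.
Proof.
move=> pp; have := prod_Cyclotomic (prime_gt0 pp).
rewrite divisors_prime // big_cons big_seq1 Phi1 subrX1 => /mulfI; apply.
by rewrite -size_poly_eq0 size_XsubC.
Qed.

Lemma Phi_prime1 p : prime p -> ('Phi_p).[1] = p%:R.
Proof.
move=> pp; rewrite Phi_prime // horner_sum.
rewrite (eq_bigr (fun _ => 1)); last by move=> i _; rewrite hornerXn expr1n.
by rewrite sumr_const card_ord.
Qed.

Lemma iterop_exp (R : nzRingType) n (x : R) : iterop n *%R x 1 = x ^+ n.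
Proof.
case: n => [|n]; first by [].
rewrite iteropS; elim: n => [|n IH]; first by rewrite expr1.
by rewrite iterS IH [in RHS]exprS.
Qed.

Lemma sgp_tele S N : \sum_(i < N.+1) sgp_coef S i = (N \in S)%:Z.
Proof.
elim: N => [|N IH]; first by rewrite big_ord1 /sgp_coef subr0.
by rewrite big_ord_recr /= IH /sgp_coef addrC subrK.
Qed.

Theorem lemma3 (S : pred nat) (P : {poly int}) :
  numerical_semigroup S -> is_semigroup_poly S P -> kronecker P ->
  exists (D : seq nat) (e : nat -> nat),
    [/\ uniq D,
        all (fun d => 0 < d)%N D,
        all (fun d => 0 < e d)%N D,
        P = \prod_(d <- D) 'Phi_d ^+ e d
      & all composite D].
Proof.
move=> [S0 Sadd [C SC]] hP [Pmon Pdisc].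
have P0 : P`_0 = 1 by rewrite hP /sgp_coef S0 subr0.
have P1 : P.[1] = 1.
  pose N := maxn (size P) C.
  rewrite (@horner_coef_wide _ N.+1); last by rewrite (leq_trans (leq_maxl _ C)).

  rewrite (eq_bigr (fun i : 'I_N.+1 => sgp_coef S i)); last first.
    by move=> i _; rewrite expr1n mulr1 hP.
  by rewrite sgp_tele SC // leq_maxr.
have P0' : P`_0 != 0 by rewrite P0 oner_eq0.
have [L [L0 DL]] := cyclo_factor Pmon (kron_roots Pmon P0' Pdisc).
have hdiv d : d \in L -> exists c : int, ('Phi_d).[1] * c = 1.
  move=> dL; exists (\prod_(y <- rem d L) ('Phi_y).[1]).
  by rewrite -[X in _ = X]P1 DL horner_prod (big_rem d dL).
exists (undup L), (fun d => count_mem d L); split.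
- exact: undup_uniq.
- by apply/allP => d; rewrite mem_undup => /(allP L0).
- apply/allP => d; rewrite mem_undup => dL; rewrite -has_count.
  by apply/hasP; exists d => //=; rewrite eqxx.
- rewrite DL -big_undup_iterop_count; apply: eq_bigr => d _; exact: iterop_exp.
apply/allP => d; rewrite mem_undup => dL.
have d0 := allP L0 d dL.
have [c hc] := hdiv d dL.
rewrite /composite; apply/andP; split.
  rewrite ltn_neqAle d0 andbT; apply/negP => /eqP d1.
  by move: hc; rewrite -d1 Phi1 !hornerE => /eqP; rewrite eq_sym oner_eq0.
apply/negP => pd; move: hc; rewrite Phi_prime1 // => /(congr1 absz).
rewrite abszM natz /= => /eqP; rewrite muln_eq1 => /andP[/eqP d1 _].
by move: pd; rewrite d1.
Qed.
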